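(* Let $r\ge2$ be an integer, $m$ a positive integer with $r<2^m$, and $c\ge1$ real. If $z$ is selected uniformly at random from $\{0,1,\dots,r-1\}$, then the probability that $d=\gcd(r,z)$ is $cm$-smooth is at least $$1-\frac{1}{c\log_2(cm)}.$$
   Context: A positive integer is $cm$-smooth if it is not divisible by any prime power greater than $cm$. Convention: $\gcd(r,0)=r$. *)

(* Defs.v *)
From mathcomp Require Import all_boot all_order all_algebra.
From mathcomp Require Import all_classical all_reals exp.
Set Implicit Arguments. Unset Strict Implicit. Unset Printing Implicit Defensive.
Import Order.TTheory GRing.Theory Num.Theory.
Local Open Scope ring_scope.

Definition log2 {R : realType} (x : R) : R := ln x / ln 2.

Definition smooth {R : realType} (B : R) (d : nat) : Prop :=
  (0 < d)%N /\
  forall p k : nat, prime p -> (0 < k)%N -> (p ^ k %| d)%N -> ((p ^ k)%:R <= B).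

(* Main.v *)
Require Import Defs.
From mathcomp Require Import all_boot all_order all_algebra.
From mathcomp Require Import all_classical all_reals exp.
From mathcomp Require Import ring.
Import Order.TTheory GRing.Theory Num.Theory.
Local Open Scope ring_scope.

Lemma count_mult (q r : nat) : (0 < q)%N -> (q %| r)%N ->
  (\sum_(z < r) (q %| z) = r %/ q)%N.
Proof.
move=> q0 qr; rewrite divn_count_dvd -(big_mkord xpredT (fun i => nat_of_bool (q %| i)%N)).
have h1 : (\sum_(0 <= i < r.+1) (q %| i) = \sum_(0 <= i < r) (q %| i) + 1)%N.
  by rewrite big_nat_recr //= qr.
have h2 : (\sum_(0 <= i < r.+1) (q %| i) = 1 + \sum_(1 <= i < r.+1) (q %| i))%N.
  by rewrite big_ltn //= dvdn0.
by move: h1; rewrite h2 addnC => /eqP; rewrite eqn_add2r => /eqP.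
Qed.

Lemma sum_le_const {R : realType} (s : seq nat) (f : nat -> R) a :
  (forall p, p \in s -> f p <= a) -> \sum_(p <- s) f p <= a *+ size s.
Proof.
elim: s => [|x s IH] H; first by rewrite big_nil.
rewrite big_cons /= mulrS lerD //; first by apply: H; rewrite inE eqxx.
by apply: IH => p ps; apply: H; rewrite inE ps orbT.
Qed.

Lemma prod_ge_const {R : realType} (s : seq nat) (f : nat -> R) a : 0 <= a ->
  (forall p, p \in s -> a <= f p) -> a ^+ size s <= \prod_(p <- s) f p.
Proof.
move=> a0; elim: s => [|x s IH] H; first by rewrite big_nil.
rewrite big_cons /= exprS ler_pM // ?exprn_ge0 //; first by apply: H; rewrite inE eqxx.
by apply: IH => p ps; apply: H; rewrite inE ps orbT.
Qed.

Theorem lemma9 (R : realType) (r m : nat) (c : R)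
  (hr : (2 <= r)%N) (hm : (0 < m)%N) (hrm : (r < 2 ^ m)%N) (hc : 1 <= c) :
  1 - 1 / (c * log2 (c * m%:R)) <=
  (#|[set z : 'I_r | `[< smooth (c * m%:R) (gcdn r z) >] ]|)%:R / r%:R.
Proof.
set B := c * m%:R.
have r0 : (0 < r)%N by apply: leq_trans hr.
have m2 : (2 <= m)%N.
  case: m hm hrm {B} => [|[|m']] //= _ h.
  by have := leq_ltn_trans hr h.
have c0 : 0 < c by apply: lt_le_trans hc.
have B2 : 2%:R <= B.
  by rewrite /B -[2%:R]mul1r; apply: ler_pM => //; rewrite ler_nat.
have B0 : 0 < B by apply: lt_le_trans B2.
pose Pj (p n : nat) := (B < (p ^ n)%:R) || (p <= 1)%N.
have exP : forall p, exists n, Pj p n.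
  move=> p; case: (leqP p 1) => p1; first by exists 0%N; rewrite /Pj p1 orbT.
  exists (Num.truncn B).+1; apply/orP; left; apply: lt_le_trans (truncnS_gt B) _.
  by rewrite ler_nat; exact: ltnW (ltn_expl _ p1).
pose j p := ex_minn (exP p).
pose q p := (p ^ j p)%N.
have qB : forall p, (1 < p)%N -> B < (q p)%:R.
  move=> p p1; rewrite /q /j; case: ex_minnP => n /orP [//|].
  by rewrite leqNgt p1.
have qmin : forall p k, (1 < p)%N -> B < (p ^ k)%:R -> (j p <= k)%N.
  by move=> p k p1 h; rewrite /j; case: ex_minnP => n _; apply; rewrite /Pj h.
pose P := [seq p <- primes r | B < (p ^ logn p r)%:R].
set good := [set z : 'I_r | _ ].
have badP : forall z : 'I_r, z \notin good -> exists2 p, p \in P & (q p %| z)%N.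
  move=> z; rewrite inE => /asboolPn nsm.
  have g0 : (0 < gcdn r z)%N by rewrite gcdn_gt0 r0.
  have [p [k [pp [k0 [dv nle]]]]] : exists p k, prime p /\ (0<k)%N /\
      (p^k %| gcdn r z)%N /\ ~ ((p^k)%:R <= B).
    apply: contra_notP nsm => H; split => // p k pp k0 dv.
    by apply: contra_notP H => nle; exists p, k.
  have ltB : B < (p^k)%:R by rewrite ltNge; apply/negP.
  have p1 := prime_gt1 pp.
  have dr : (p^k %| r)%N := dvdn_trans dv (dvdn_gcdl _ _).
  have dz : (p^k %| z)%N := dvdn_trans dv (dvdn_gcdr _ _).
  have kl : (k <= logn p r)%N by rewrite -pfactor_dvdn.
  exists p; last exact: dvdn_trans (dvdn_exp2l p (qmin p k p1 ltB)) dz.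
  rewrite mem_filter mem_primes pp r0 /=; apply/andP; split.
    by apply: lt_le_trans ltB _; rewrite ler_nat leq_pexp2l // ltnW.
  have : (p ^ 1 %| r)%N by rewrite pfactor_dvdn // (leq_trans k0 kl).
  by rewrite expn1.
have PP : forall p, p \in P -> [/\ (1 < p)%N, B < (q p)%:R & (q p %| r)%N].
  move=> p; rewrite mem_filter mem_primes => /andP [h /and3P [pp _ _]].
  have p1 := prime_gt1 pp; split => //; first exact: qB.
  by apply: dvdn_trans (dvdn_exp2l p (qmin p _ p1 h)) _; rewrite pfactor_dvdn.
have cnt : (#|~: good| <= \sum_(p <- P) r %/ q p)%N.
  rewrite -sum1_card.
  apply: (@leq_trans (\sum_(z : 'I_r) \sum_(p <- P) (q p %| z))%N).
    rewrite big_mkcond /=; apply: leq_sum => z _; case: ifP => // zb.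
    have [p pP dz] : exists2 p, p \in P & (q p %| z)%N by apply: badP; move: zb; rewrite finset.in_setC.
    rewrite lt0n sum_nat_seq_eq0; apply/allPn; exists p => //; by rewrite dz.
  rewrite exchange_big /= [X in (X <= _)%N]big_seq [X in (_ <= X)%N]big_seq.
  apply: leq_sum => p pP; case: (PP p pP) => p1 _ qr.
  by rewrite count_mult // expn_gt0 ltnW.
have prodr : (\prod_(p <- P) p ^ logn p r %| r)%N.
  have E : (\prod_(p <- primes r) p ^ logn p r = r)%N.
    by rewrite [RHS](prod_prime_decomp r0) prime_decompE big_map.
  rewrite -[X in (_ %| X)%N]E [X in (_ %| X)%N](bigID (fun p => B < (p ^ logn p r)%:R)) /= /P big_filter.
  exact: dvdn_mulr.
set t := size P.
set b := #|~: good|.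
have gb : (#|good| = r - b)%N by rewrite -[in RHS](card_ord r) -(cardsC good) addnK.
have br : (b <= r)%N by rewrite -[in X in (_ <= X)%N](card_ord r) -(cardsC good) leq_addl.
have bR : b%:R <= (r%:R / B) *+ t.
  apply: le_trans (_ : (\sum_(p <- P) r %/ q p)%:R <= _); first by rewrite ler_nat.
  rewrite natr_sum; apply: sum_le_const => p pP; case: (PP p pP) => p1 qBp qr.
  have q0 : (0 < q p)%N by rewrite expn_gt0 ltnW.
  rewrite ler_pdivlMr //; apply: le_trans (_ : (r %/ q p)%:R * (q p)%:R <= _).
    by rewrite ler_wpM2l // ltW.
  by rewrite -natrM divnK.
have Bt : B ^+ t <= 2%:R ^+ m.
  apply: le_trans (_ : \prod_(p <- P) ((p ^ logn p r)%N)%:R <= _).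
    apply: prod_ge_const; first exact: ltW.
    by move=> p; rewrite mem_filter => /andP [h _]; exact: ltW.
  rewrite -natr_prod -natrX ler_nat; apply: leq_trans (dvdn_leq r0 prodr) (ltnW _).
  exact: hrm.
have L0 : 0 < ln B by apply: ln_gt0; apply: lt_le_trans B2; rewrite ltr1n.
have l0 : 0 < ln (2%:R : R) by apply: ln_gt0; rewrite ltr1n.
have Lt : ln B *+ t <= ln (2%:R : R) *+ m.
  by rewrite -lnXn // -lnXn // ler_ln // ?posrE ?exprn_gt0 // ltr0n.
have r0R : 0 < r%:R :> R by rewrite ltr0n.
have m0R : 0 < m%:R :> R by rewrite ltr0n.
rewrite gb natrB // mulrBl divff ?lt0r_neq0 // lerD2l lerN2.
have h1 : b%:R / r%:R <= t%:R / B.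
  rewrite ler_pdivrMr //; apply: le_trans bR _.
  by rewrite (_ : r%:R / B *+ t = t%:R / B * r%:R) // -mulr_natr; ring.
apply: le_trans h1 _.
rewrite /log2 /B ler_pdivrMr ?mulr_gt0 //.
rewrite (_ : 1 / (c * (ln (c * m%:R) / ln 2)) * (c * m%:R) = ln 2 * m%:R / ln (c * m%:R)); last first.
  by field; rewrite ?lt0r_neq0.
rewrite ler_pdivlMr // mulrC.
move: Lt; rewrite -[ln B *+ t]mulr_natr -[ln (2%:R) *+ m]mulr_natr => H. exact: H.

Qed.
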